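(* For any samples $(X_i,y_i)_{i=1}^n$ with $X_i\in\mathbb{R}^d$, $y_i\in\mathbb{R}$, and any $k\ge 0$, it holds that $\mathrm{Stability}(X,y)\le k$ if and only if $$\exists\lambda\in\mathbb{R}^{d-1}:\ \forall u\in\mathbb{R}^d:\ \exists w\in[0,1]^n:\ \|w\|_1\ge n-k \ \wedge\ \sum_{i=1}^n w_i(\langle\tilde X_i,\lambda\rangle - y_i)\langle X_i,u\rangle\ge 0.$$
   Context: For $w\in[0,1]^n$, $\mathrm{OLS}(X,y,w) := \arg\min_{\beta\in\mathbb{R}^d}\frac1n\sum_{i=1}^n w_i(\langle X_i,\beta\rangle - y_i)^2$, and $\mathrm{Stability}(X,y) := \inf_{w\in[0,1]^n,\ \beta\in\mathbb{R}^d}\{\, n-\|w\|_1 : \beta_1 = 0 \text{ and } \beta\in \mathrm{OLS}(X,y,w)\}$. $\tilde X_i\in\mathbb{R}^{d-1}$ denotes the vector of coordinates $2,\dots,d$ of $X_i$ (i.e. the $i$-th row of the $n\times(d-1)$ matrix $\tilde X$ whose columns are columns $2,\dots,d$ of the matrix $X$ with rows $X_i$). *)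

(* Defs.v *)
From HB Require Import structures.
From mathcomp Require Import all_boot all_order all_algebra.
From mathcomp Require Import boolp classical_sets reals constructive_ereal ereal.
Set Implicit Arguments. Unset Strict Implicit. Unset Printing Implicit Defensive.
Import Order.TTheory GRing.Theory Num.Theory.
Local Open Scope ring_scope.
Local Open Scope classical_set_scope.

Section Defs.
Variables (R : realType) (n d : nat).

Definition inner_row (X : 'M[R]_(n, d.+1)) (i : 'I_n) (b : 'I_d.+1 -> R) : R :=
  \sum_(j < d.+1) X i j * b j.

Definition Xtilde (X : 'M[R]_(n, d.+1)) : 'M[R]_(n, d) :=
  \matrix_(i < n, j < d) X i (lift ord0 j).

Definition wls (X : 'M[R]_(n, d.+1)) (y : 'I_n -> R) (w : 'I_n -> R)
  (b : 'I_d.+1 -> R) : R :=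
  n%:R^-1 * \sum_(i < n) w i * (inner_row X i b - y i) ^+ 2.

Definition OLS (X : 'M[R]_(n, d.+1)) (y : 'I_n -> R) (w : 'I_n -> R) :
  set ('I_d.+1 -> R) :=
  [set b | forall b' : 'I_d.+1 -> R, wls X y w b <= wls X y w b'].

Definition in_unit_cube (w : 'I_n -> R) : Prop := forall i, 0 <= w i <= 1.

Definition l1norm (w : 'I_n -> R) : R := \sum_(i < n) `|w i|.

(* Stability(X,y) = inf { n - ||w||_1 : w in [0,1]^n, beta_1 = 0, beta in OLS(X,y,w) }
   as an extended real (inf of the empty set is +oo). *)
Definition Stability (X : 'M[R]_(n, d.+1)) (y : 'I_n -> R) : \bar R :=
  ereal_inf [set ((n%:R - l1norm w)%:E) | w in
    [set w | in_unit_cube w /\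
       exists b : 'I_d.+1 -> R, b ord0 = 0 /\ OLS X y w b]].

End Defs.

(* Main.v *)
Require Import Defs.
From HB Require Import structures.
From mathcomp Require Import all_boot all_order all_algebra.
From mathcomp Require Import boolp classical_sets reals constructive_ereal ereal.
From mathcomp Require Import topology normedtype derive.
From mathcomp Require Import ring lra.
Import Order.TTheory GRing.Theory Num.Theory.
Import numFieldNormedType.Exports.
Local Open Scope ring_scope.
Local Open Scope classical_set_scope.

Section T.
Variables (R : realType) (T : topologicalType).

Lemma contD (f g : T -> R) : continuous f -> continuous g -> continuous (fun x => f x + g x).
Proof. by move=> cf cg x; apply: cvgD; [exact: cf | exact: cg]. Qed.

Lemma contM (f g : T -> R) : continuous f -> continuous g -> continuous (fun x => f x * g x).
Proof. by move=> cf cg x; apply: cvgM; [exact: cf | exact: cg]. Qed.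

Lemma contC (c : R) : continuous (fun _ : T => c).
Proof. by move=> x; exact: cvg_cst. Qed.

Lemma cont_sum (I : Type) (r : seq I) (P : pred I) (f : I -> T -> R) :
  (forall i, continuous (f i)) -> continuous (fun x => \sum_(i <- r | P i) f i x).
Proof.
move=> cf; elim: r => [|a r IH].
  under eq_fun do rewrite big_nil; exact: contC.
under eq_fun do rewrite big_cons.
case: (P a) => //; exact: contD.
Qed.
End T.

Section U.
Variables (R : realType) (n : nat).
Definition box : set 'rV[R]_n := [set v | forall i, `[0, 1]%classic (v ord0 i)].
Lemma box_compact : compact box.
Proof. exact: (@rV_compact R n (fun=> `[0, 1]%classic) (fun=> @segment_compact R 0 1)). Qed.
Lemma box_closed : closed box.
Proof. exact: (compact_closed (@norm_hausdorff _ _) box_compact). Qed.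
Lemma boxE v : box v <-> forall i, 0 <= v ord0 i <= 1.
Proof. by split=> h i; have := h i; rewrite /= in_itv. Qed.
Lemma cont_coord i : continuous (fun v : 'rV[R]_n => v ord0 i).
Proof. exact: coord_continuous. Qed.
End U.
Arguments box {R n}.
Arguments box_compact {R n}.
Arguments box_closed {R n}.
Arguments boxE {R n}.
Arguments cont_coord {R n}.

Section V.
Variables (R : realType) (n : nat).

Lemma minimax (m : nat) (a : 'I_n -> 'I_m -> R) (c : R) :
  (forall u : 'I_m -> R, exists w : 'I_n -> R, (forall i, 0 <= w i <= 1) /\
     c <= \sum_(i < n) w i /\ 0 <= \sum_(i < n) w i * \sum_(j < m) a i j * u j) ->
  exists w : 'I_n -> R, (forall i, 0 <= w i <= 1) /\ c <= \sum_(i < n) w i /\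
     forall j, \sum_(i < n) w i * a i j = 0.
Proof.
move=> H.
pose G (v : 'rV[R]_n) j := \sum_(i < n) v ord0 i * a i j.
pose q v := \sum_(j < m) G v j ^+ 2.
pose C := [set v : 'rV[R]_n | box v /\ c <= \sum_(i < n) v ord0 i].
have Ccl : closed C.
  apply: (@closedI _ box ((fun v : 'rV[R]_n => \sum_(i < n) v ord0 i) @^-1` [set x | c <= x])).
    exact: box_closed.
  apply: preimage_closed; last exact: closed_ge.
  move=> v _; apply: (@cont_sum R _ _ _ _ (fun i (v : 'rV[R]_n) => v ord0 i)) => i.
  exact: cont_coord.
have Ccp : compact C.
  by apply: (subclosed_compact Ccl box_compact) => v [].
have C0 : C !=set0.
  have [w [w01 [wc _]]] := H (fun=> 0).
  exists (\row_i w i); split.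
    by apply/boxE => i; rewrite mxE.
  by under eq_bigr do rewrite mxE.
have qc : {within C, continuous q}.
  apply: continuous_subspaceT; apply: cont_sum => j.
  have cG : continuous (G ^~ j).
    by apply: cont_sum => i; apply: contM; [exact: cont_coord | exact: contC].
  by rewrite /=; apply: contM.
have [v0 /set_mem [v0b v0c] v0min] := compact_EVT_min C0 Ccp qc.
have [g gE] : exists g : 'I_m -> R, forall j, G v0 j = g j by exists (G v0).
have qE : q v0 = \sum_(j < m) g j ^+ 2 by apply: eq_bigr => j _; rewrite gE.
have [allz|] := pselect (forall j, g j = 0).
  exists (fun i => v0 ord0 i); split; first exact/boxE.
  by split => // j; rewrite -[RHS](allz j) -gE.
move=> /existsNP [j0 /eqP gj0].
have q0pos : 0 < q v0.
  rewrite qE (bigD1 j0) //=.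
  have h1 : 0 < g j0 ^+ 2 by rewrite lt_def sqr_ge0 andbT sqrf_eq0.
  have h2 : 0 <= \sum_(j < m | j != j0) g j ^+ 2 by apply: sumr_ge0 => j _; exact: sqr_ge0.
  lra.
have [w [w01 [wc wpos]]] := H (fun j => - g j).
pose h j := \sum_(i < n) w i * a i j - g j.
pose A := \sum_(j < m) g j * h j.
pose D := \sum_(j < m) h j ^+ 2.
have hA : A <= - q v0.
  have e1 : \sum_(i < n) w i * \sum_(j < m) a i j * - g j =
            - \sum_(j < m) g j * \sum_(i < n) w i * a i j.
    transitivity (\sum_(j < m) \sum_(i < n) - (g j * (w i * a i j))).
      under eq_bigr do rewrite mulr_sumr.
      rewrite exchange_big /=; apply: eq_bigr => j _; apply: eq_bigr => i _; ring.
    rewrite -sumrN; apply: eq_bigr => j _; rewrite sumrN mulr_sumr //.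
  have e2 : A = \sum_(j < m) g j * \sum_(i < n) w i * a i j - q v0.
    by rewrite /A qE -sumrB; apply: eq_bigr => j _; rewrite /h; ring.
  rewrite e1 in wpos; lra.
have D0 : 0 <= D by apply: sumr_ge0 => j _; exact: sqr_ge0.
have DA : 0 < D - A by lra.
pose t := - A / (D - A).
have tE : t * (D - A) = - A by rewrite /t divfK // gt_eqF.
have t0 : 0 < t by rewrite /t divr_gt0 //; lra.
have t1 : t <= 1 by rewrite /t ler_pdivrMr // mul1r; lra.
pose vt : 'rV[R]_n := \row_i ((1 - t) * v0 ord0 i + t * w i).
have vtC : C vt.
  split.
    apply/boxE => i; rewrite mxE.
    have := (proj1 (boxE v0) v0b) i; have := w01 i.
    move=> /andP [? ?] /andP [? ?]; apply/andP; split; nra.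
  have -> : \sum_(i < n) vt ord0 i = (1 - t) * \sum_(i < n) v0 ord0 i + t * \sum_(i < n) w i.
    by rewrite !mulr_sumr -big_split; apply: eq_bigr => i _; rewrite mxE.
  nra.
have GvT j : G vt j = g j + t * h j.
  rewrite /h -gE /G mulrBr !mulr_sumr addrC -sumrB -big_split /=.
  by apply: eq_bigr => i _; rewrite mxE; ring.
have qvt : q vt = q v0 + 2 * t * A + t ^+ 2 * D.
  rewrite qE /q /A /D !mulr_sumr -!big_split /=.
  by apply: eq_bigr => j _; rewrite GvT; ring.
have := v0min vt (mem_set vtC); rewrite qvt.
have tD : t * D = - A + t * A by rewrite -tE; ring.
have e3 : 2 * t * A + t ^+ 2 * D = t * A * (1 + t).
  by transitivity (2 * t * A + t * (t * D)); [ring | rewrite tD; ring].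
have h4 : 0 < t * (- A) * (1 + t) by apply: mulr_gt0; [apply: mulr_gt0|]; lra.
lra.
Qed.
End V.

Section S.
Variables (R : realType) (n d : nat) (X : 'M[R]_(n, d.+1)) (y : 'I_n -> R).

Definition rr (lam : 'I_d -> R) (i : 'I_n) : R :=
  \sum_(j < d) Xtilde X i j * lam j - y i.

Definition Phi (w : 'I_n -> R) (lam : 'I_d -> R) (u : 'I_d.+1 -> R) : R :=
  \sum_(i < n) w i * rr lam i * inner_row X i u.

Definition Feas (w : 'I_n -> R) := exists lam, forall u, Phi w lam u = 0.

Definition ext (lam : 'I_d -> R) : 'I_d.+1 -> R :=
  fun j => if unlift ord0 j is Some j' then lam j' else 0.

Lemma inner_ext lam i : inner_row X i (ext lam) = \sum_(j < d) Xtilde X i j * lam j.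
Proof.
rewrite /inner_row big_ord_recl /ext unlift_none mulr0 add0r.
by apply: eq_bigr => j _; rewrite liftK mxE.
Qed.

Lemma inner_lin i (a b : 'I_d.+1 -> R) (s : R) :
  inner_row X i (fun j => a j + s * b j) = inner_row X i a + s * inner_row X i b.
Proof.
rewrite /inner_row mulr_sumr -big_split; apply: eq_bigr => j _ /=.
by rewrite mulrDr mulrCA.
Qed.

Lemma quad_zero (P Q : R) : 0 <= Q -> (forall t, 0 <= 2 * t * P + t ^+ 2 * Q) -> P = 0.
Proof.
move=> Q0 H.
have := H (- P / (Q + 1)).
have Q1 : 0 < Q + 1 by rewrite ltr_wpDl.
set t := - P / (Q + 1).
have tE : t * (Q + 1) = - P by rewrite /t divfK // gt_eqF.
move=> h.
have h1 : 0 <= (2 * t * P + t ^+ 2 * Q) * (Q + 1) ^+ 2 by rewrite mulr_ge0 // sqr_ge0.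
have e1 : (2 * t * P + t ^+ 2 * Q) * (Q + 1) ^+ 2 =
  2 * P * (t * (Q + 1)) * (Q + 1) + Q * (t * (Q + 1)) ^+ 2 by ring.
rewrite e1 tE in h1.
have e2 : 2 * P * - P * (Q + 1) + Q * (- P) ^+ 2 = - (P ^+ 2 * (Q + 2)) by ring.
rewrite e2 oppr_ge0 pmulr_lle0 ?ltr_wpDl // in h1.
by apply/eqP; rewrite -sqrf_eq0 eq_le h1 sqr_ge0.
Qed.

Lemma rr_inner lam i : rr lam i = inner_row X i (ext lam) - y i.
Proof. by rewrite /rr inner_ext. Qed.

Lemma feas_OLS w lam : (forall i, 0 <= w i) -> (forall u, Phi w lam u = 0) ->
  OLS X y w (ext lam).
Proof.
move=> w0 H b'; rewrite /wls; apply: ler_wpM2l; first by rewrite invr_ge0 ler0n.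
pose u := fun j => b' j - ext lam j.
have hq i : inner_row X i b' = inner_row X i (ext lam) + inner_row X i u.
  by rewrite /inner_row -big_split; apply: eq_bigr => j _; rewrite /u /=; ring.
rewrite -subr_ge0 -sumrB.
have -> : \sum_(i < n) (w i * (inner_row X i b' - y i) ^+ 2 -
     w i * (inner_row X i (ext lam) - y i) ^+ 2) =
   \sum_(i < n) w i * (inner_row X i u) ^+ 2 + 2 * Phi w lam u.
  rewrite /Phi mulr_sumr -big_split; apply: eq_bigr => i _ /=.
  by rewrite hq rr_inner; ring.
rewrite H mulr0 addr0; apply: sumr_ge0 => i _; by rewrite mulr_ge0 ?w0 ?sqr_ge0.
Qed.

Lemma OLS_feas w b : (forall i, 0 <= w i) -> b ord0 = 0 -> OLS X y w b ->
  forall u, Phi w (fun j => b (lift ord0 j)) u = 0.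
Proof.
move=> w0 b0 Hb u.
have hr i : rr (fun j => b (lift ord0 j)) i = inner_row X i b - y i.
  rewrite /rr /inner_row big_ord_recl b0 mulr0 add0r; congr (_ - _).
  by apply: eq_bigr => j _; rewrite mxE.
have [n0|npos] := posnP n.
  by rewrite /Phi big1 // => i; have := ltn_ord i; rewrite {2}n0.
pose Q := \sum_(i < n) w i * (inner_row X i u) ^+ 2.
apply: (@quad_zero _ Q); first by apply: sumr_ge0 => i _; rewrite mulr_ge0 // sqr_ge0.
move=> t.
have := Hb (fun j => b j + t * u j); rewrite /wls.
rewrite ler_pM2l ?invr_gt0 ?ltr0n // -subr_ge0 -sumrB.
have -> : \sum_(i < n) (w i * (inner_row X i (fun j => b j + t * u j) - y i) ^+ 2 -
     w i * (inner_row X i b - y i) ^+ 2) = 2 * t * Phi w (fun j => b (lift ord0 j)) u + t ^+ 2 * Q.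
  rewrite /Phi /Q !mulr_sumr -big_split; apply: eq_bigr => i _ /=.
  by rewrite inner_lin hr; ring.
by [].
Qed.

Lemma fredholm (p q : nat) (M : 'M[R]_(p, q)) (b : 'rV[R]_q) :
  (forall c : 'cV_q, M *m c = 0 -> b *m c = 0) -> exists x : 'rV_p, x *m M = b.
Proof.
move=> H.
have : (b <= M)%MS.
  rewrite submxE; apply/eqP/matrixP => i j.
  pose dl : 'M[R]_(q, 1) := delta_mx j 0.
  have hc : M *m (cokermx M *m dl) = 0 by rewrite mulmxA mulmx_coker mul0mx.
  have := H _ hc; rewrite mulmxA => /matrixP /(_ i 0).
  have e : (b *m cokermx M *m dl) i 0 = (b *m cokermx M) i j.
    rewrite mxE (bigD1 j) //= big1 => [|k kj]; last by rewrite /dl [delta_mx _ _ _ _]mxE (negbTE kj) /= mulr0.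
    by rewrite /dl [delta_mx _ _ _ _]mxE !eqxx mulr1 addr0.
  by rewrite e => ->; rewrite !mxE.
by move=> /submxP [D ->]; exists D.
Qed.

Definition hh (u : 'I_d.+1 -> R) i := inner_row X i u.

Lemma feas_of_orth w :
  (forall u, (forall l, \sum_(i < n) w i * Xtilde X i l * inner_row X i u = 0) ->
     \sum_(i < n) w i * y i * inner_row X i u = 0) -> Feas w.
Proof.
move=> H.
pose M : 'M[R]_(d, d.+1) := \matrix_(l, j) \sum_(i < n) w i * Xtilde X i l * X i j.
pose bv : 'rV[R]_(d.+1) := \row_j \sum_(i < n) w i * y i * X i j.
have [x hx] : exists x : 'rV_d, x *m M = bv.
  apply: fredholm => c Hc.
  pose u := fun j => c j 0.
  have hu : forall l, \sum_(i < n) w i * Xtilde X i l * inner_row X i u = 0.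
    move=> l; transitivity ((M *m c) l 0); last by rewrite Hc mxE.
    rewrite /inner_row; under eq_bigr => i _ do rewrite mulr_sumr.
    rewrite exchange_big mxE; apply: eq_bigr => j _; rewrite mxE mulr_suml.
    by apply: eq_bigr => i _; rewrite mulrA.
  apply/matrixP => i0 j0; rewrite !ord1 [RHS]mxE -(H u hu).
  rewrite /inner_row; under [RHS]eq_bigr => i _ do rewrite mulr_sumr.
  rewrite [RHS]exchange_big mxE; apply: eq_bigr => j _; rewrite mxE mulr_suml.
  by apply: eq_bigr => i _; rewrite mulrA.
exists (fun l => x 0 l) => u.
have e1 : Phi w (fun l => x 0 l) u = \sum_(j < d.+1) u j * (x *m M) 0 j - \sum_(j < d.+1) u j * bv 0 j.
  rewrite /Phi /rr.
  have -> : \sum_(i < n) w i * (\sum_(j < d) Xtilde X i j * x 0 j - y i) * inner_row X i u =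
     \sum_(i < n) w i * (\sum_(j < d) Xtilde X i j * x 0 j) * inner_row X i u -
     \sum_(i < n) w i * y i * inner_row X i u.
    by rewrite -sumrB; apply: eq_bigr => i _; ring.
  congr (_ - _).
    rewrite /inner_row.
    transitivity (\sum_(i < n) \sum_(l < d) \sum_(j < d.+1) w i * Xtilde X i l * x 0 l * X i j * u j).
      apply: eq_bigr => i _; rewrite -mulrA big_distrlr mulr_sumr; apply: eq_bigr => l _.
      rewrite mulr_sumr; apply: eq_bigr => j _ /=; ring.
    transitivity (\sum_(j < d.+1) \sum_(l < d) \sum_(i < n) w i * Xtilde X i l * x 0 l * X i j * u j).
      under eq_bigr => i _ do rewrite exchange_big.
      rewrite exchange_big; apply: eq_bigr => j _; exact: exchange_big.
    apply: eq_bigr => j _; rewrite mxE mulr_sumr; apply: eq_bigr => l _.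
    rewrite mxE !mulr_sumr; apply: eq_bigr => i _ /=; ring.
  rewrite /inner_row; under eq_bigr => i _ do rewrite mulr_sumr.
  rewrite exchange_big; apply: eq_bigr => j _; rewrite mxE mulr_sumr.
  apply: eq_bigr => i _ /=; ring.
by rewrite e1 hx subrr.
Qed.

Lemma tb (dl w r h Y rho eta : R) : 0 <= dl -> dl <= w -> w * r ^+ 2 <= Y ->
  dl < rho -> rho * (Y * h ^+ 2 + 1) = eta ^+ 2 -> 0 <= eta -> `|dl * r * h| <= eta.
Proof.
move=> d0 dw wY drho rE e0.
have r2 := sqr_ge0 r; have h2 := sqr_ge0 h.
have Y0 : 0 <= Y by apply: le_trans wY; rewrite mulr_ge0 // (le_trans d0 dw).
have s1 : (dl * r * h) ^+ 2 = dl * (dl * r ^+ 2) * h ^+ 2 by ring.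
have s2 : dl * r ^+ 2 <= Y by apply: le_trans wY; rewrite ler_wpM2r.
have s3 : dl * (dl * r ^+ 2) * h ^+ 2 <= dl * Y * h ^+ 2.
  by rewrite ler_wpM2r // ler_wpM2l.
have s4 : dl * Y * h ^+ 2 <= rho * (Y * h ^+ 2 + 1).
  have : dl * (Y * h ^+ 2) <= rho * (Y * h ^+ 2) by apply: ler_wpM2r; [rewrite mulr_ge0 | exact: ltW].
  have : 0 <= rho by apply: le_trans d0 (ltW drho).
  move=> ? ?; rewrite -mulrA mulrDr mulr1; lra.
have : `|dl * r * h| ^+ 2 <= eta ^+ 2.
  by rewrite real_normK ?num_real // s1 -rE (le_trans s3 s4).
by rewrite ler_pXn2r // nnegrE.
Qed.

Definition Fset : set 'rV[R]_n := [set v | box v /\ Feas (fun i => v ord0 i)].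

Lemma closure_feas vs : closure Fset vs -> Feas (fun i => vs ord0 i).
Proof.
move=> cl.
have vsb : box vs by apply: box_closed; apply: (closureS _ cl) => v [].
set ws := fun i => vs ord0 i.
have ws01 : forall i, 0 <= ws i <= 1 by move=> i; exact: (proj1 (boxE vs) vsb i).
apply: feas_of_orth => u hu.
set beta := \sum_(i < n) ws i * y i * inner_row X i u.
suff key : forall e, 0 < e -> `|beta| <= e.
  apply: normr0_eq0; apply/eqP; rewrite eq_le normr_ge0 andbT.
  by apply/ler_addgt0Pr => e e0; rewrite add0r; exact: key.
move=> e e0.
pose Y := \sum_(i < n) y i ^+ 2.
pose hv i := inner_row X i u.
pose eta := e / (n%:R + 1).
have n10 : 0 < n%:R + 1 :> R by rewrite ltr_wpDl.
have eta0 : 0 < eta by rewrite divr_gt0.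
have Y0 : 0 <= Y by apply: sumr_ge0 => i _; exact: sqr_ge0.
pose rho i := eta ^+ 2 / (Y * hv i ^+ 2 + 1).
have rhoE i : rho i * (Y * hv i ^+ 2 + 1) = eta ^+ 2.
  by rewrite /rho divfK // gt_eqF // ltr_wpDl // mulr_ge0 // sqr_ge0.
have rho0 i : 0 < rho i.
  by rewrite /rho divr_gt0 ?exprn_gt0 // ltr_wpDl // mulr_ge0 // sqr_ge0.
have nbi : forall i, \forall v \near vs, `|ws i - (v : 'rV[R]_n) ord0 i| < rho i /\
    (ws i = 0 \/ `|ws i - v ord0 i| < ws i / 2).
  move=> i.
  have c1 : \forall t \near vs, `|vs ord0 i - (t : 'rV[R]_n) ord0 i| < rho i.
    by apply: (@cvgr_dist_lt _ _ _ (nbhs vs) _ (fun v : 'rV[R]_n => v ord0 i) (vs ord0 i) (cont_coord i vs) _ (rho0 i)).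
  have [z|nz] := eqVneq (ws i) 0.
    by move: c1; apply: filterS => v h; split => //; left.
  have wp : 0 < ws i / 2.
    by rewrite divr_gt0 // lt_def nz; case/andP: (ws01 i).
  have c2 : \forall t \near vs, `|vs ord0 i - (t : 'rV[R]_n) ord0 i| < ws i / 2.
    by apply: (@cvgr_dist_lt _ _ _ (nbhs vs) _ (fun v : 'rV[R]_n => v ord0 i) (vs ord0 i) (cont_coord i vs) _ wp).
  by move: c1 c2; apply: filterS2 => v h1 h2; split => //; right.
have nb := filter_forall (nbhs_filter vs) nbi.
have [v [[vb [lam hlam]] hvv]] := cl _ nb.
set w := fun i => v ord0 i.
have w01 : forall i, 0 <= w i <= 1 by move=> i; exact: (proj1 (boxE v) vb i).
have E1 : \sum_(i < n) w i * rr lam i * hv i = 0 := hlam u.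
have E2 : \sum_(i < n) ws i * (\sum_(l < d) Xtilde X i l * lam l) * hv i = 0.
  transitivity (\sum_(l < d) lam l * \sum_(i < n) ws i * Xtilde X i l * hv i).
    under eq_bigr => i _ do rewrite [ws i * _]mulr_sumr [(\sum_(l < d) _) * _]mulr_suml.
    rewrite exchange_big; apply: eq_bigr => l _; rewrite mulr_sumr.
    by apply: eq_bigr => i _; rewrite /hv; ring.
  by rewrite big1 // => l _; rewrite hu mulr0.
have bE : beta = \sum_(i < n) (w i - ws i) * rr lam i * hv i.
  have -> : \sum_(i < n) (w i - ws i) * rr lam i * hv i =
     \sum_(i < n) w i * rr lam i * hv i -
     \sum_(i < n) ws i * (\sum_(l < d) Xtilde X i l * lam l) * hv i + beta.
    rewrite /beta -sumrB -big_split; apply: eq_bigr => i _ /=; rewrite /rr /hv; ring.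
  by rewrite E1 E2 subrr add0r.
have En : \sum_(i < n) w i * rr lam i ^+ 2 <= Y.
  have h0 := hlam (ext lam).
  have e1 : \sum_(i < n) w i * y i ^+ 2 - \sum_(i < n) w i * rr lam i ^+ 2 =
     \sum_(i < n) w i * (\sum_(l < d) Xtilde X i l * lam l) ^+ 2 -
     2 * Phi w lam (ext lam).
    rewrite /Phi mulr_sumr -!sumrB; apply: eq_bigr => i _; rewrite inner_ext /rr; ring.
  rewrite h0 mulr0 subr0 in e1.
  have e2 : 0 <= \sum_(i < n) w i * (\sum_(l < d) Xtilde X i l * lam l) ^+ 2.
    apply: sumr_ge0 => i _; rewrite mulr_ge0 ?sqr_ge0 //; by case/andP: (w01 i).
  have e3 : \sum_(i < n) w i * y i ^+ 2 <= Y.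
    apply: ler_sum => i _; rewrite ler_piMl ?sqr_ge0 //; by case/andP: (w01 i).
  lra.
have Ei i : w i * rr lam i ^+ 2 <= Y.
  apply: le_trans En; rewrite (bigD1 i) //= lerDl.
  apply: sumr_ge0 => j _; rewrite mulr_ge0 ?sqr_ge0 //; by case/andP: (w01 j).
have T i : `|(w i - ws i) * rr lam i * hv i| <= eta.
  have [h1 h2] := hvv i.
  have dw : `|ws i - w i| <= w i.
    case: h2 => [z|h2].
      rewrite /w z sub0r normrN ger0_norm //; by case/andP: (w01 i).
    have := ler_norm (ws i - w i); rewrite /w in h2 * => h3.
    lra.
  have := tb _ _ _ _ _ _ _ (normr_ge0 _) dw (Ei i) h1 (rhoE i) (ltW eta0).
  by rewrite !normrM normr_id distrC.
rewrite bE; apply: le_trans (ler_norm_sum _ _ _) _.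
apply: le_trans (ler_sum _ (fun i _ => T i)) _.
have -> : \sum_(i < n) eta = eta *+ n.
  by rewrite big_const_ord iter_addr_0.
rewrite -mulr_natl /eta mulrCA ger_pMr // ler_pdivrMr // mul1r lerDl //.
Qed.

Lemma l1E (w : 'I_n -> R) : in_unit_cube w -> l1norm w = \sum_(i < n) w i.
Proof. by move=> hw; apply: eq_bigr => i _; rewrite ger0_norm //; case/andP: (hw i). Qed.

Lemma rowF (w : 'I_n -> R) : in_unit_cube w -> Feas w -> Fset (\row_i w i).
Proof.
move=> hw fw; split; first by apply/boxE => i; rewrite mxE; exact: hw.
by have -> : (fun i => (\row_j w j) ord0 i) = w by apply/funext => i; rewrite mxE.
Qed.

Lemma attain (c : R) : (forall e, 0 < e -> exists w : 'I_n -> R, in_unit_cube w /\ Feas w /\ c - e <= \sum_(i < n) w i) ->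
  exists w : 'I_n -> R, in_unit_cube w /\ Feas w /\ c <= \sum_(i < n) w i.
Proof.
move=> H.
pose K := closure Fset.
have Kb : K `<=` box.
  move=> v hv; apply: box_closed; exact: (closureS (fun v (h : Fset v) => proj1 h) hv).
have Kc : compact K := subclosed_compact (@closed_closure _ Fset) box_compact Kb.
have K0 : K !=set0.
  have [w [hw [fw _]]] := H 1 ltr01.
  by exists (\row_i w i); apply: subset_closure; exact: rowF.
have sc : {within K, continuous (fun v : 'rV[R]_n => \sum_(i < n) v ord0 i)}.
  apply: continuous_subspaceT.
  by apply: (@cont_sum R _ _ _ _ (fun i (v : 'rV[R]_n) => v ord0 i)) => i; exact: cont_coord.
have [vs /set_mem vsK vsmax] := compact_EVT_max K0 Kc sc.
exists (fun i => vs ord0 i); split; first exact: (proj1 (boxE vs) (Kb _ vsK)).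
split; first exact: closure_feas.
apply/ler_addgt0Pr => e e0.
have [w [hw [fw hc]]] := H e e0.
have := vsmax (\row_i w i) (mem_set (subset_closure (rowF _ hw fw))).
under eq_bigr do rewrite mxE.
move=> h; lra.
Qed.

End S.
Arguments rr {R n d} X y lam i.
Arguments Phi {R n d} X y w lam u.
Arguments Feas {R n d} X y w.
Arguments ext {R d} lam j.
Arguments OLS_feas {R n d X y w b}.
Arguments feas_OLS {R n d X y w lam}.
Arguments attain {R n d X y c}.
Arguments l1E {R n w}.

Theorem lemma1 (R : realType) (n d : nat) (X : 'M[R]_(n, d.+1)) (y : 'I_n -> R)
  (k : R) : 0 <= k ->
  ((Stability X y <= k%:E)%E <->
   exists lam : 'I_d -> R, forall u : 'I_d.+1 -> R,
     exists w : 'I_n -> R, in_unit_cube w /\ n%:R - k <= l1norm w /\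
       0 <= \sum_(i < n) w i * (\sum_(j < d) Xtilde X i j * lam j - y i)
                              * inner_row X i u).
Proof.
move=> k0; split.
- move=> hS.
  have H : forall e, 0 < e -> exists w, in_unit_cube w /\ Feas X y w /\
      n%:R - k - e <= \sum_(i < n) w i.
    move=> e e0.
    have : (Stability X y < (k + e)%:E)%E.
      by apply: le_lt_trans hS _; rewrite lte_fin ltrDl.
    move=> /ereal_inf_lt [z [w [hw [b [b0 hb]]]] <-]; rewrite lte_fin => hlt.
    exists w; split => //; split.
      exists (fun j => b (lift ord0 j)); apply: OLS_feas b0 hb.
      by move=> i; case/andP: (hw i).
    rewrite -l1E //; lra.
  have [w [hw [[lam hlam] hc]]] := attain H.
  exists lam => u; exists w; split => //; split; first by rewrite l1E.
  by have := hlam u; rewrite /Phi /rr => ->.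
- move=> [lam H].
  case: (@minimax R n d.+1 (fun i j => rr X y lam i * X i j) (n%:R - k)) => [u|w [hw [hc hz]]].
    have [w [hw [hl hp]]] := H u.
    exists w; split => //; split; first by rewrite -l1E.
    apply: (le_trans hp) => {hp}; rewrite le_eqVlt; apply/orP; left; apply/eqP.
    apply: eq_bigr => i _ /=; rewrite /inner_row -mulrA; congr (_ * _).
    by rewrite mulr_sumr; apply: eq_bigr => j _; rewrite mulrA.
  have fw : forall u, Phi X y w lam u = 0.
    move=> u; rewrite /Phi.
    transitivity (\sum_(j < d.+1) u j * \sum_(i < n) w i * (rr X y lam i * X i j)).
      rewrite /inner_row; under eq_bigr do rewrite mulr_sumr.
      rewrite exchange_big; apply: eq_bigr => j _; rewrite mulr_sumr.
      by apply: eq_bigr => i _; ring.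
    by rewrite big1 // => j _; rewrite hz mulr0.
  have hO := feas_OLS (fun i => proj1 (andP (hw i))) fw.
  apply: (@le_trans _ _ ((n%:R - l1norm w)%:E)%E).
    apply: ereal_inf_lbound.
    exists w => //; split => //; exists (ext lam); split => //.
    by rewrite /ext unlift_none.
  by rewrite lee_fin l1E //; lra.
Qed.
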